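(* Consider the variety of nonempty sets (i.e. left $S$-acts over the trivial monoid $S=\{1\}$). Two nonempty sets $G_1,G_2$ are geometrically equivalent if and only if either $|G_1|=|G_2|=1$, or both $|G_1|\ge 2$ and $|G_2|\ge 2$. Thus there are exactly two geometric equivalence classes: the singletons, and all sets with more than one element.
   Context: For nonempty sets, the free object on a nonempty finite set $X$ is $X$ itself, homomorphisms are arbitrary maps, and congruences are equivalence relations. For a set $G$ and a binary relation $T\subseteq X\times X$, let $T'_G=\{\mu:X\to G : T\subseteq\ker\mu\}$, where $\ker\mu=\{(x,y):\mu(x)=\mu(y)\}$, and $T''_G=\bigcap_{\mu\in T'_G}\ker\mu$ (empty intersection $=X\times X$). Sets $G_1,G_2$ are geometrically equivalent iff $T''_{G_1}=T''_{G_2}$ for every nonempty finite set $X$ and every relation $T\subseteq X\times X$. *)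

(* Defs.v *)
From mathcomp Require Import all_boot.
Set Implicit Arguments. Unset Strict Implicit. Unset Printing Implicit Defensive.

Definition kerm (X G : Type) (mu : X -> G) : X -> X -> Prop :=
  fun x y => mu x = mu y.

Definition Tprime (G : Type) (X : Type) (T : X -> X -> Prop) (mu : X -> G) : Prop :=
  forall x y, T x y -> kerm mu x y.

(* T''_G : intersection of ker mu over mu in T'_G (empty intersection = X x X) *)
Definition Tclosure (G : Type) (X : Type) (T : X -> X -> Prop) : X -> X -> Prop :=
  fun x y => forall mu : X -> G, Tprime T mu -> kerm mu x y.

Definition geom_equiv (G1 G2 : Type) : Prop :=
  forall (X : finType), 0 < #|X| ->
  forall T : X -> X -> Prop,
    forall x y : X, Tclosure G1 T x y <-> Tclosure G2 T x y.

Definition at_most_one (G : Type) : Prop := forall a b : G, a = b.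
Definition at_least_two (G : Type) : Prop := exists a b : G, a <> b.

(* Main.v *)
Require Import Defs.
From mathcomp Require Import all_boot.
From Stdlib Require Import Classical ClassicalEpsilon.

Lemma one_closure (G : Type) (X : Type) (T : X -> X -> Prop) x y :
  at_most_one G -> Tclosure G T x y.
Proof. move=> H mu _; apply: H. Qed.

Lemma two_closure (G : Type) (X : Type) (T : X -> X -> Prop) x y :
  at_least_two G -> (Tclosure G T x y <-> Tclosure bool T x y).
Proof.
move=> [a [b ab]]; split.
- move=> H nu Hnu.
  have := H (fun z => if nu z then a else b).
  rewrite /kerm; case: (nu x); case: (nu y) => //.
  + move=> K; exfalso; apply: ab; apply: K => u v /Hnu; rewrite /kerm => ->; done.
  + move=> K; exfalso; apply: ab; symmetry; apply: K => u v /Hnu; rewrite /kerm => ->; done.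
- move=> H mu Hmu.
  pose nu z := if excluded_middle_informative (mu z = mu x) then true else false.
  have Hnu : Tprime T nu.
    move=> u v /Hmu; rewrite /kerm /nu => e.
    case: excluded_middle_informative; case: excluded_middle_informative => //.
    * by move=> n1 e2; exfalso; apply: n1; rewrite -e.
    * by move=> e1 n2; exfalso; apply: n2; rewrite e.
  have := H nu Hnu; rewrite /kerm /nu.
  destruct (excluded_middle_informative (mu x = mu x)) as [e0|n]; last by case: n.
  by destruct (excluded_middle_informative (mu y = mu x)) as [e1|n1].
Qed.

Lemma dich (G : Type) : at_most_one G \/ at_least_two G.
Proof.
case: (classic (at_least_two G)) => [h|h]; [by right|left].
move=> a b; apply: NNPP => nab; apply: h; by exists a, b.
Qed.

Lemma mixed (G1 G2 : Type) : at_most_one G1 -> at_least_two G2 -> ~ geom_equiv G1 G2.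
Proof.
move=> h1 [a [b ab]] H.
have := (H bool (ltac:(by rewrite card_bool)) (fun _ _ => False) true false).1 (@one_closure G1 bool _ true false h1).
move=> K; apply: ab; apply: (K (fun z => if z then a else b)) => //.
Qed.

Theorem theorem3p2 (G1 G2 : Type) (ne1 : inhabited G1) (ne2 : inhabited G2) :
  geom_equiv G1 G2 <->
  ((at_most_one G1 /\ at_most_one G2) \/ (at_least_two G1 /\ at_least_two G2)).
Proof.
split.
- move=> H.
  case: (dich G1) => h1; case: (dich G2) => h2; auto.
  + by case: (@mixed G1 G2 h1 h2 H).
  + exfalso; apply: (@mixed G2 G1 h2 h1) => X hX T x y; by rewrite H.
- case=> [[h1 h2]|[h1 h2]] X _ T x y.
  + by split=> _; apply: one_closure.
  + by rewrite two_closure // two_closure.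
Qed.
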